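(* Let $\Sigma,\Gamma$ be finite alphabets, each with at least two letters. Let $w,u\in\Sigma^{\mathbb{N}}$ be infinite words with $w = pu$ for some finite word $p\in\Sigma^*$. Then $\mathrm{ACE}_{\mathcal{I}}(w) = \mathrm{ACE}_{\mathcal{I}}(u)$.
   Context: $\mathrm{Fact}_n(w)$ is the set of length-$n$ factors of $w$. For a nonempty word $v$ and integer $p\ge0$, $v^{p/|v|}$ is the prefix of length $p$ of $vvv\cdots$. For a nonempty finite word $u$, $\mathrm{E}(u) = \sup\{ r \in \mathbb{Q} : u = v^r \text{ for some nonempty } v\}$. For an infinite word $w$, $\mathrm{ACE}(w) = \limsup_{n\to\infty}\sup\{\mathrm{E}(u) : u\in\mathrm{Fact}_n(w)\}$. $\mathcal{I}$ is the set of injective morphisms $\Sigma^*\to\Gamma^*$ and $\mathrm{ACE}_{\mathcal{I}}(w) = \sup\{\mathrm{ACE}(h(w)) : h\in\mathcal{I}\}$. *)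

(* Defs.v *)
From HB Require Import structures.
From mathcomp Require Import all_boot all_order all_algebra.
From mathcomp Require Import all_classical all_reals all_analysis.
Set Implicit Arguments. Unset Strict Implicit. Unset Printing Implicit Defensive.
Import Order.TTheory GRing.Theory Num.Theory.
Local Open Scope classical_set_scope.
Local Open Scope ring_scope.

Definition catw (S : Type) (p : seq S) (u : nat -> S) : nat -> S :=
  fun n => if (n < size p)%N then nth (u 0%N) p n else u (n - size p)%N.

Definition Fact (S : Type) (n : nat) (w : nat -> S) : set (seq S) :=
  [set x | exists i : nat, x = mkseq (fun k => w (i + k)%N) n].

(* v^{p/|v|}: the prefix of length p of v v v ... (for nonempty v). *)
Definition vpow (S : Type) (v : seq S) (p : nat) : seq S :=
  take p (flatten (nseq p v)).

(* E(u) = sup { r in Q : u = v^r for some nonempty v }, where u = v^r means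
   r|v| = p is a nonnegative integer and u = v^{p/|v|}. *)
Definition Eexp (R : realType) (S : eqType) (u : seq S) : \bar R :=
  ereal_sup [set ((ratr r : R)%:E) | r in
     [set r : rat | exists v : seq S, v != [::] /\
        exists p : nat, r * (size v)%:R = p%:R /\ u = vpow v p]].

Definition ACE (R : realType) (S : eqType) (w : nat -> S) : \bar R :=
  limn_esup (fun n => ereal_sup [set Eexp R x | x in Fact n w]).

Definition hmap (S G : Type) (f : S -> seq G) (x : seq S) : seq G :=
  flatten (map f x).

(* h(w) for an infinite word w; d is a dummy default letter, irrelevant when
   f is non-erasing (in particular when hmap f is injective). *)
Definition imgword (S G : Type) (d : G) (f : S -> seq G) (w : nat -> S) : nat -> G :=
  fun n => nth d (hmap f (mkseq w n.+1)) n.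

Definition ACE_I (R : realType) (S : Type) (G : eqType) (w : nat -> S) : \bar R :=
  ereal_sup [set ACE R (imgword fd.2 fd.1 w) | fd in
     [set fd : (S -> seq G) * G | injective (hmap fd.1)]].

(* Main.v *)
Require Import Defs.
From HB Require Import structures.
From mathcomp Require Import all_boot all_order all_algebra.
From mathcomp Require Import all_classical all_reals all_analysis.
From mathcomp Require Import zify.
Set Implicit Arguments. Unset Strict Implicit. Unset Printing Implicit Defensive.
Import Order.TTheory GRing.Theory Num.Theory.

Section Comb.
Variable S : eqType.

Lemma size_flat_nseq (v : seq S) p : size (flatten (nseq p v)) = p * size v.
Proof. by elim: p => //= p IH; rewrite size_cat IH mulSn. Qed.

Lemma nth_flat_nseq d (v : seq S) p k : k < p * size v ->
  nth d (flatten (nseq p v)) k = nth d v (k %% size v).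
Proof.
elim: p k => [|p IH] k //=; rewrite mulSn => hk.
rewrite nth_cat; case: ltnP => h; first by rewrite modn_small.
rewrite IH; last by rewrite ltn_subLR.
by rewrite -{2}(subnK h) modnDr.
Qed.

Lemma vpowE d (v : seq S) p : v != [::] ->
  vpow v p = mkseq (fun i => nth d v (i %% size v)) p.
Proof.
move=> v0; have sv : 0 < size v by rewrite lt0n size_eq0.
have sz : size (vpow v p) = p.
  by rewrite /vpow size_take size_flat_nseq; case: ltnP => // h;
     apply/eqP; rewrite eqn_leq h /= leq_pmulr.
apply: (@eq_from_nth _ d); first by rewrite sz size_mkseq.
move=> i; rewrite sz => ip; rewrite nth_mkseq // /vpow nth_take //.
by rewrite nth_flat_nseq // (leq_trans ip) // leq_pmulr.
Qed.

Lemma size_vpow (v : seq S) p : v != [::] -> size (vpow v p) = p.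
Proof.
case: v => // a v _; by rewrite (vpowE a) // size_mkseq.
Qed.

Lemma vpow_self (x : seq S) : x != [::] -> vpow x (size x) = x.
Proof.
case: x => // a x0 h; rewrite (vpowE a) //.
apply: (@eq_from_nth _ a); first by rewrite size_mkseq.
by move=> i; rewrite size_mkseq => hi; rewrite nth_mkseq // modn_small.
Qed.

Lemma mkseq_catw (p : seq S) u k :
  mkseq (catw p u) (size p + k) = p ++ mkseq u k.
Proof.
apply: (@eq_from_nth _ (u 0)); first by rewrite size_mkseq size_cat size_mkseq.
move=> i; rewrite size_mkseq => hi; rewrite nth_mkseq // nth_cat /catw.
case: ltnP => // h; rewrite nth_mkseq //; by rewrite ltn_subLR.
Qed.

Lemma mkseq_cons (f : nat -> S) n : mkseq f n.+1 = f 0 :: mkseq (fun k => f k.+1) n.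
Proof.
apply: (@eq_from_nth _ (f 0)); first by rewrite size_mkseq [RHS]/= size_mkseq.
move=> i; rewrite size_mkseq; case: i => [|i] hi; first by rewrite nth_mkseq.
by rewrite nth_mkseq //= nth_mkseq.
Qed.

End Comb.

Section Wrap2.
Local Open Scope classical_set_scope.
Local Open Scope ring_scope.

Section EexpL.
Variables (R : realType) (S : eqType).

Lemma Eexp_ge1 (x : seq S) : x != [::] -> (1%:E <= Eexp R x)%E.
Proof.
move=> x0; apply: le_ereal_sup_tmp; exists (ratr 1)%:E; last by rewrite rmorph1.
exists 1 => //; exists x; split => //; exists (size x); split; first by rewrite mul1r.
by rewrite vpow_self.
Qed.

Lemma Eexp_cons (a : S) y (c : R) : y != [::] -> 0 <= c ->
  (size y).+1%:R <= c * (size y)%:R -> (Eexp R (a :: y) <= c%:E * Eexp R y)%E.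
Proof.
move=> y0 c0 hc; apply: ge_ereal_sup => _ [r [v [v0 [p [hr hx]]]] <-].
have sv : (0 < size v)%N by rewrite lt0n size_eq0.
have hp : p = (size y).+1 by rewrite -[RHS]/(size (a :: y)) hx size_vpow.
pose m := size v.
pose v' := mkseq (fun j => nth a v (j.+1 %% m)) m.
have v'0 : v' != [::] by rewrite -size_eq0 size_mkseq -lt0n.
pose r' : rat := (size y)%:R / m%:R.
have m0 : (m%:R : rat) != 0 by rewrite pnatr_eq0 -lt0n.
have hy : y = vpow v' (size y).
  rewrite (vpowE a) // size_mkseq.
  apply: (@eq_from_nth _ a); first by rewrite size_mkseq.
  move=> i hi; rewrite nth_mkseq // nth_mkseq; last by rewrite ltn_mod.
  have := congr1 (fun s => nth a s i.+1) hx; rewrite /= => ->.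
  rewrite (vpowE a) // nth_mkseq; last by rewrite hp.
  by rewrite -addn1 -modnDml addn1.
have hr' : (ratr r' : R) = (size y)%:R / m%:R.
  by rewrite /r' rmorphM rmorphV ?unitfE // !rmorph_nat.
have hrr : (ratr r : R) = (size y).+1%:R / m%:R.
  have : (ratr (r * m%:R) : R) = ratr (p%:R) by rewrite hr.
  rewrite rmorphM !rmorph_nat hp => <-.
  by rewrite mulfK // pnatr_eq0 -lt0n.
apply: (@le_trans _ _ (c%:E * (ratr r')%:E)%E).
  rewrite -EFinM lee_fin hrr hr' mulrA ler_pM2r //.
  by rewrite invr_gt0 ltr0n.
apply: lee_wpmul2l; first by rewrite lee_fin.
apply: ereal_sup_ubound; exists r' => //; exists v'; split => //.
exists (size y); split; last by [].
by rewrite /r' size_mkseq mulfVK.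
Qed.

End EexpL.

End Wrap2.

Section Wrap3.
Local Open Scope classical_set_scope.
Local Open Scope ring_scope.

Section Shift.
Variables (R : realType) (S : eqType).
Local Open Scope ereal_scope.

Definition aseq (w : nat -> S) n := ereal_sup [set Eexp R x | x in Fact n w].

Lemma Fact_shift (w : nat -> S) n : Fact n (fun k => w k.+1) `<=` Fact n w.
Proof. by move=> x [i ->]; exists i.+1. Qed.

Lemma aseq_shift (w : nat -> S) n : aseq (fun k => w k.+1) n <= aseq w n.
Proof. by apply: ereal_sup_le; apply: image_subset; apply: Fact_shift. Qed.

Lemma ACE_shift1_le (w : nat -> S) : ACE R (fun k => w k.+1) <= ACE R w.
Proof.
rewrite /ACE !limn_esup_lim; apply: lee_lim; try exact: is_cvg_esups.
apply: nearW => N; apply: ge_ereal_sup => _ [k /= Nk <-].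
apply: (le_trans (aseq_shift w k)).
by apply: ereal_sup_ubound; exists k.
Qed.

Lemma real_ineq (N n : nat) : (N.+1 <= n)%N ->
  ((n.+1%:R : R) <= (1 + @harmonic R N) * n%:R)%R.
Proof.
move=> hn; rewrite /harmonic /= mulrDl mul1r -addn1 natrD lerD2l.
rewrite mulrC ler_pdivlMr ?ltr0n // mul1r ler_nat //.
Qed.

Lemma esups_bound (w : nat -> S) N :
  esups (aseq w) N.+2 <= (1 + @harmonic R N)%:E * esups (aseq (fun k => w k.+1)) N.+1.
Proof.
set w' := fun k => w k.+1.
have c1 : 1 <= (1 + @harmonic R N)%:E.
  by rewrite lee_fin lerDl harmonic_ge0.
have c0 : 0 <= (1 + @harmonic R N)%:E by apply: le_trans c1.
apply: ge_ereal_sup => _ [n /= Nn <-].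
apply: ge_ereal_sup => _ [x [i ->] <-].
have hB : forall m y, (N.+1 <= m)%N -> Fact m w' y ->
    Eexp R y <= esups (aseq w') N.+1.
  move=> m y hm hy; apply: (@le_trans _ _ (aseq w' m)).
    by apply: ereal_sup_ubound; exists y.
  by apply: ereal_sup_ubound; exists m.
case: i => [|i].
  case: n Nn => [//|n] Nn.
  rewrite mkseq_cons.
  apply: (@le_trans _ _ ((1 + @harmonic R N)%:E * Eexp R (mkseq (fun k => w (0 + k.+1)%N) n))).
    apply: Eexp_cons.
    - by rewrite -size_eq0 size_mkseq -lt0n; lia.
    - by rewrite -lee_fin (le_trans _ c1).
    - by rewrite size_mkseq; apply: real_ineq; lia.
  apply: lee_wpmul2l => //; apply: (hB n); first by lia.
  by exists 0%N.
apply: (le_trans (lee_pemull _ c1)).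
  apply: le_trans (Eexp_ge1 _ _) => //.
  by rewrite -size_eq0 size_mkseq -lt0n; lia.
apply: lee_wpmul2l => //; apply: (hB n); first by lia.
by exists i.
Qed.

Lemma ACE_shift1_ge (w : nat -> S) : ACE R w <= ACE R (fun k => w k.+1).
Proof.
set w' := fun k => w k.+1.
change (limn_esup (aseq w) <= limn_esup (aseq w')).
rewrite !limn_esup_lim.
rewrite (cvg_lim _ (@cvg_esups_inf _ (aseq w))) //.
set B := esups (aseq w').
have cB : cvgn B by apply: is_cvg_esups.
have cS : (fun N => (1 + @harmonic R N)%:E * B N.+1) @ \oo --> 1%:E * limn B.
  apply: cvgeM.
  - have [Lf|Lnf] := boolP (limn B \is a fin_num).
      by apply: mule_def_fin.
    by apply: mule_def_neq0_infty.
  - have -> : (fun N => (1 + @harmonic R N)%:E) = (fun N => 1%:E + (@harmonic R N)%:E).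
      by apply: boolp.funext => N; rewrite EFinD.
    rewrite -[X in _ --> X]adde0; apply: cvgeD => //; first exact: cvg_cst.
    exact: cvge_harmonic.
  - by rewrite (cvg_shiftS B); exact: cB.
rewrite -[X in _ <= X]mul1e; apply: (cvge_ge _ cS); apply: nearW => N.
apply: (@le_trans _ _ (esups (aseq w) N.+2)).
  by apply: ereal_inf_lbound; exists N.+2.
exact: esups_bound.
Qed.

Lemma ACE_shift1 (w : nat -> S) : ACE R (fun k => w k.+1) = ACE R w.
Proof. by apply/eqP; rewrite eq_le ACE_shift1_le ACE_shift1_ge. Qed.

Lemma ACE_shift (w : nat -> S) K : ACE R (fun k => w (k + K)%N) = ACE R w.
Proof.
elim: K => [|K IH]; first by congr (ACE R _); apply: boolp.funext => k; rewrite addn0.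
rewrite -IH -(ACE_shift1 (fun k => w (k + K)%N)).
by congr (ACE R _); apply: boolp.funext => k; rewrite addnS addSn.
Qed.

End Shift.

End Wrap3.

Section Img.
Variables (S : eqType) (G : Type).

Lemma hmap_cat (f : S -> seq G) s t : hmap f (s ++ t) = hmap f s ++ hmap f t.
Proof. by rewrite /hmap map_cat flatten_cat. Qed.

Lemma nonerasing (f : S -> seq G) : injective (hmap f) -> forall s, size (f s) > 0.
Proof.
move=> inj s; case E: (f s) => [|//].
have : hmap f [:: s] = hmap f [::] by rewrite /hmap /= E.
by move/inj.
Qed.

Lemma size_hmap (f : S -> seq G) x : (forall s, size (f s) > 0) ->
  size x <= size (hmap f x).
Proof.
move=> ne; elim: x => //= a x IH; rewrite -[a :: x]cat1s hmap_cat size_cat.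
have : 1 <= size (hmap f [:: a]) by rewrite /hmap /= cats0 ne.
lia.
Qed.

Lemma imgword_stable (d : G) (f : S -> seq G) w n m : (forall s, size (f s) > 0) ->
  n < m -> nth d (hmap f (mkseq w m)) n = imgword d f w n.
Proof.
move=> ne nm; rewrite /imgword -(subnKC nm) /mkseq iotaD map_cat hmap_cat nth_cat.
have := size_hmap (map w (iota 0 n.+1)) ne; rewrite size_map size_iota => h.
by rewrite (leq_trans _ h).
Qed.

Lemma imgword_catw (d : G) (f : S -> seq G) p u n : (forall s, size (f s) > 0) ->
  imgword d f u n = imgword d f (catw p u) (n + size (hmap f p)).
Proof.
move=> ne; set H := size (hmap f p).
rewrite -(@imgword_stable d f (catw p u) (n + H) (size p + (n + H).+1)) //; last by lia.
rewrite mkseq_catw hmap_cat nth_cat -/H.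
have -> : (n + H < H) = false by lia.
rewrite addnK imgword_stable //; lia.
Qed.

End Img.

Theorem theorem20 (R : realType) (Sigma Gamma : finType) :
  (2 <= #|Sigma|)%N -> (2 <= #|Gamma|)%N ->
  forall (w u : nat -> Sigma) (p : seq Sigma),
    w = catw p u ->
    ACE_I R Gamma w = ACE_I R Gamma u.
Proof.
move=> _ _ w u p ->; rewrite /ACE_I; congr ereal_sup.
apply: eq_imagel => -[f d] /= inj.
rewrite -(ACE_shift R (imgword d f (catw p u)) (size (hmap f p))); congr (ACE R _).
apply: boolp.funext => n; rewrite -imgword_catw //.
exact: nonerasing.
Qed.
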